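(* We have $h_s(2) = 6$ and $h_s(3) = 12$.
   Context: A real matrix is called totally $1$-submodular if every square submatrix (of every size) has determinant of absolute value at most $1$. For $t \in \mathbb{R}^m$ and $A\in\mathbb{R}^{m\times n}$ with columns $A_1,\dots,A_n$, $t+A$ denotes the matrix with columns $t+A_1,\dots,t+A_n$. The shifted Heller constant $h_s(m)$ is the maximum $n$ such that there exist a vector $t \in [0,1)^m\setminus\{\mathbf 0\}$ and a matrix $A \in \{-1,0,1\}^{m\times n}$ with pairwise distinct columns such that $t+A$ is totally $1$-submodular. *)

(* Defs.v *)
From HB Require Import structures.
From mathcomp Require Import all_boot all_order all_algebra.
From mathcomp Require Import reals.
Set Implicit Arguments. Unset Strict Implicit. Unset Printing Implicit Defensive.
Import Order.TTheory GRing.Theory Num.Theory.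
Local Open Scope ring_scope.

Definition totally_1_submodular (R : numDomainType) (m n : nat)
    (M : 'M[R]_(m, n)) : Prop :=
  forall (k : nat) (f : 'I_k -> 'I_m) (g : 'I_k -> 'I_n),
    injective f -> injective g ->
    `|\det (\matrix_(i < k, j < k) M (f i) (g j))| <= 1.

Definition shift_mx (R : numDomainType) (m n : nat)
    (t : 'cV[R]_m) (A : 'M[int]_(m, n)) : 'M[R]_(m, n) :=
  \matrix_(i < m, j < n) (t i ord0 + (A i j)%:~R).

Definition shifted_heller_feasible (R : realType) (m n : nat) : Prop :=
  exists (t : 'cV[R]_m) (A : 'M[int]_(m, n)),
    [/\ forall i, 0 <= t i ord0 < 1,
        t != 0,
        forall i j, A i j \in [:: -1; 0; 1],
        injective (fun j => col j A)
      & totally_1_submodular (shift_mx t A)].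

Definition shifted_heller_constant_is (R : realType) (m N : nat) : Prop :=
  shifted_heller_feasible R m N /\
  forall n : nat, shifted_heller_feasible R m n -> (n <= N)%N.

(* Main.v *)
Require Import Defs.
From HB Require Import structures.
From mathcomp Require Import all_boot all_order all_algebra.
From mathcomp Require Import reals.
From mathcomp Require Import ring lra zify.
Set Implicit Arguments. Unset Strict Implicit. Unset Printing Implicit Defensive.
Import Order.TTheory GRing.Theory Num.Theory.
Local Open Scope ring_scope.

Lemma det2 (R : comNzRingType) (B : 'M[R]_2) :
  \det B = B 0 0 * B 1 1 - B 0 1 * B 1 0.
Proof.
rewrite (expand_det_row _ 0) !big_ord_recr big_ord0 /= /cofactor !det_mx11 !mxE /=.
rewrite add0r !expr0 !expr1 !mul1r mulN1r mulrN.
by congr (B _ _ * B _ _ - B _ _ * B _ _); apply/val_inj.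
Qed.

Lemma det3 (R : comNzRingType) (B : 'M[R]_3) :
  \det B = B 0 0 * (B 1 1 * B 2 2 - B 1 2 * B 2 1)
         - B 0 1 * (B 1 0 * B 2 2 - B 1 2 * B 2 0)
         + B 0 2 * (B 1 0 * B 2 1 - B 1 1 * B 2 0).
Proof.
rewrite (expand_det_row _ 0) !big_ord_recr big_ord0 /= /cofactor !det2 !mxE /=.
rewrite add0r !expr0 expr1 !mul1r mulN1r mulrN.
rewrite (_ : (-1) ^+ (0 + 2) = 1 :> R); last by rewrite add0n expr2 mulN1r opprK.
rewrite mul1r.
by congr (B _ _ * (B _ _ * B _ _ - B _ _ * B _ _) - B _ _ * (B _ _ * B _ _ - B _ _ * B _ _) + B _ _ * (B _ _ * B _ _ - B _ _ * B _ _)); apply/val_inj.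
Qed.

Definition f2 (T : Type) (a b : T) (k : 'I_2) : T := if val k == 0%N then a else b.
Definition f3 (T : Type) (a b c : T) (k : 'I_3) : T :=
  if val k == 0%N then a else if val k == 1%N then b else c.

Lemma f2_inj (m : nat) (a b : 'I_m) : a != b -> injective (f2 a b).
Proof.
move=> ab [[|[|//]] p] [[|[|//]] q] /=; rewrite /f2 /= => e; apply/val_inj => //=.
- by rewrite e eqxx in ab.
- by rewrite e eqxx in ab.
Qed.

Lemma f3_inj (m : nat) (a b c : 'I_m) : a != b -> a != c -> b != c -> injective (f3 a b c).
Proof.
move=> ab ac bc [[|[|[|//]]] p] [[|[|[|//]]] q] /=; rewrite /f3 /= => e; apply/val_inj => //=;
  by rewrite e eqxx in ab ac bc.
Qed.

Section T1.
Variable (R : realType) (m n : nat) (M : 'M[R]_(m, n)).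
Hypothesis HM : totally_1_submodular M.

Lemma t1_entry i j : `|M i j| <= 1.
Proof.
have := HM (f := fun _ : 'I_1 => i) (g := fun _ : 'I_1 => j).
rewrite det_mx11 mxE; apply.
- by move=> [[|//] ?] [[|//] ?] _; apply/val_inj.
- by move=> [[|//] ?] [[|//] ?] _; apply/val_inj.
Qed.

Lemma t1_det2 i1 i2 j1 j2 : `|M i1 j1 * M i2 j2 - M i1 j2 * M i2 j1| <= 1.
Proof.
have [->|ni] := eqVneq i1 i2; first by rewrite [M i2 j1 * _]mulrC subrr normr0.
have [->|nj] := eqVneq j1 j2; first by rewrite [M i1 j2 * _]mulrC subrr normr0.
have := HM (f2_inj ni) (f2_inj nj).
by rewrite det2 !mxE.
Qed.

Lemma t1_det3 i1 i2 i3 j1 j2 j3 : i1 != i2 -> i1 != i3 -> i2 != i3 ->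
  j1 != j2 -> j1 != j3 -> j2 != j3 ->
  `|M i1 j1 * (M i2 j2 * M i3 j3 - M i2 j3 * M i3 j2)
    - M i1 j2 * (M i2 j1 * M i3 j3 - M i2 j3 * M i3 j1)
    + M i1 j3 * (M i2 j1 * M i3 j2 - M i2 j2 * M i3 j1)| <= 1.
Proof.
move=> a b c d e f; have := HM (f3_inj a b c) (f3_inj d e f).
by rewrite det3 !mxE.
Qed.
End T1.

Definition chk1 m n (B : nat -> nat -> int) : bool :=
  all (fun i => all (fun j => `|B i j| <= 2) (iota 0 n)) (iota 0 m).
Definition chk2 m n (B : nat -> nat -> int) : bool :=
  all (fun i1 => all (fun i2 => all (fun j1 => all (fun j2 =>
    `|B i1 j1 * B i2 j2 - B i1 j2 * B i2 j1| <= 4) (iota 0 n)) (iota 0 n)) (iota 0 m)) (iota 0 m).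
Definition chk3 m n (B : nat -> nat -> int) : bool :=
  all (fun i1 => all (fun i2 => all (fun i3 => all (fun j1 => all (fun j2 => all (fun j3 =>
  `| B i1 j1 * (B i2 j2 * B i3 j3 - B i2 j3 * B i3 j2) - B i1 j2 * (B i2 j1 * B i3 j3 - B i2 j3 * B i3 j1) + B i1 j3 * (B i2 j1 * B i3 j2 - B i2 j2 * B i3 j1)| <= 8)
   (iota 0 n)) (iota 0 n)) (iota 0 n)) (iota 0 m)) (iota 0 m)) (iota 0 m).

Lemma nb (R : realType) (x : int) (c : nat) : (0 < c)%N -> `|x| <= c%:Z -> `|x%:~R / c%:R : R| <= 1.
Proof.
move=> c0 h; rewrite normrM normfV normr_nat ler_pdivrMr ?ltr0n // mul1r.
by rewrite -intr_norm -[c%:R]/((c%:Z)%:~R : R) ler_int.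
Qed.

Lemma mem_io m (i : 'I_m) : (i : nat) \in iota 0 m.
Proof. by rewrite mem_iota /= add0n ltn_ord. Qed.

Lemma tot_from_check (R : realType) m n (M : 'M[R]_(m,n)) (B : nat -> nat -> int) :
  (m <= 3)%N ->
  (forall i j, M i j = (B i j)%:~R / 2) ->
  chk1 m n B -> chk2 m n B -> chk3 m n B ->
  totally_1_submodular M.
Proof.
move=> m3 HB c1 c2 c3 k f g fi gi.
have km : (k <= m)%N by have := leq_card f fi; rewrite !card_ord.
case: k f g fi gi km => [|[|[|[|k]]]] f g fi gi km.
- by rewrite det_mx00 normr1.
- rewrite det_mx11 mxE HB; apply: (@nb R _ 2) => //.
  by move/allP: c1 => /(_ _ (mem_io (f 0))) /allP /(_ _ (mem_io (g 0))).
- rewrite det2 !mxE !HB.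
  have -> : forall a b c d : int, (a%:~R / 2) * (b%:~R / 2) - (c%:~R / 2) * (d%:~R / 2)
     = ((a * b - c * d)%:~R / 4%:R : R).
    by move=> a b c d; rewrite rmorphB !rmorphM /=; field.
  apply: nb => //.
  move/allP: c2 => /(_ _ (mem_io (f 0))) /allP /(_ _ (mem_io (f 1))).
  by move=> /allP /(_ _ (mem_io (g 0))) /allP /(_ _ (mem_io (g 1))).
- rewrite det3 !mxE !HB.
  have -> : forall a1 a2 a3 b1 b2 b3 c1 c2 c3 : int,
    (a1%:~R / 2) * ((b2%:~R / 2) * (c3%:~R / 2) - (b3%:~R / 2) * (c2%:~R / 2))
    - (a2%:~R / 2) * ((b1%:~R / 2) * (c3%:~R / 2) - (b3%:~R / 2) * (c1%:~R / 2))
    + (a3%:~R / 2) * ((b1%:~R / 2) * (c2%:~R / 2) - (b2%:~R / 2) * (c1%:~R / 2))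
     = ((a1 * (b2 * c3 - b3 * c2) - a2 * (b1 * c3 - b3 * c1) + a3 * (b1 * c2 - b2 * c1))%:~R / 8%:R : R).
    by move=> *; rewrite rmorphD !rmorphB !rmorphM !rmorphB !rmorphM /=; field.
  apply: nb => //.
  move/allP: c3 => /(_ _ (mem_io (f 0))) /allP /(_ _ (mem_io (f 1))) /allP /(_ _ (mem_io (f 2))).
  by move=> /allP /(_ _ (mem_io (g 0))) /allP /(_ _ (mem_io (g 1))) /allP /(_ _ (mem_io (g 2))).
- by move: km m3 => /leq_trans H /H.
Qed.

Definition A2f (i j : nat) : int :=
  if i == 0%N then (if (j < 3)%N then 0 else -1) else Posz (j %% 3) - 1.
Definition B2 (i j : nat) : int := (if i == 0%N then 1 else 0) + (A2f i j + A2f i j).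
Definition A3f (i j : nat) : int :=
  if i == 0%N then (if (j < 6)%N then 0 else -1)
  else if i == 1%N then (if (j %% 6 < 3)%N then 0 else -1)
  else Posz (j %% 3) - 1.
Definition B3 (i j : nat) : int := (if (i < 2)%N then 1 else 0) + (A3f i j + A3f i j).

Lemma B2chk : [&& chk1 2 6 B2, chk2 2 6 B2 & chk3 2 6 B2]. Proof. by vm_compute. Qed.
Lemma B3chk : [&& chk1 3 12 B3, chk2 3 12 B3 & chk3 3 12 B3]. Proof. by vm_compute. Qed.

Definition injchk2 : bool := all (fun j => all (fun j' =>
  [&& A2f 0 j == A2f 0 j' & A2f 1 j == A2f 1 j'] ==> (j == j')) (iota 0 6)) (iota 0 6).
Definition injchk3 : bool := all (fun j => all (fun j' =>
  [&& A3f 0 j == A3f 0 j', A3f 1 j == A3f 1 j' & A3f 2 j == A3f 2 j'] ==> (j == j')) (iota 0 12)) (iota 0 12).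
Lemma injchk2_ok : injchk2. Proof. by vm_compute. Qed.
Lemma injchk3_ok : injchk3. Proof. by vm_compute. Qed.
Definition valchk m n (Af : nat -> nat -> int) : bool :=
  all (fun i => all (fun j => Af i j \in [:: -1; 0; 1]) (iota 0 n)) (iota 0 m).
Lemma valchk2 : valchk 2 6 A2f. Proof. by vm_compute. Qed.
Lemma valchk3 : valchk 3 12 A3f. Proof. by vm_compute. Qed.

Lemma exist2 (R : realType) : shifted_heller_feasible R 2 6.
Proof.
pose t : 'cV[R]_2 := \col_(i < 2) (if (i : nat) == 0%N then 2^-1 else 0).
pose A : 'M[int]_(2, 6) := \matrix_(i < 2, j < 6) A2f i j.
exists t, A; split.
- by move=> [[|[|//]] ?]; rewrite !mxE /=; apply/andP; split; lra.
- apply/eqP => /matrixP /(_ 0 0); rewrite !mxE /= => h.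
  have : (0:R) < 2^-1 by rewrite invr_gt0 ltr0n.
  by rewrite h ltxx.
- by move=> i j; rewrite mxE; move/allP: valchk2 => /(_ _ (mem_io i)) /allP /(_ _ (mem_io j)).
- move=> j j' /matrixP e; have e0 := e 0 0; have e1 := e 1 0; rewrite !mxE in e0 e1.
  apply/val_inj/eqP.
  move/allP: injchk2_ok => /(_ _ (mem_io j)) /allP /(_ _ (mem_io j')) /implyP; apply.
  by rewrite e0 e1 !eqxx.
- have [c1 c2 c3] := and3P B2chk.
  apply: (@tot_from_check R 2 6 (shift_mx t A) B2 isT _ c1 c2 c3).
 
  move=> [[|[|//]] ?] j; by rewrite !mxE /B2 !intrD /=; field.
Qed.

Lemma exist3 (R : realType) : shifted_heller_feasible R 3 12.
Proof.
pose t : 'cV[R]_3 := \col_(i < 3) (if (i < 2)%N then 2^-1 else 0).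
pose A : 'M[int]_(3, 12) := \matrix_(i < 3, j < 12) A3f i j.
exists t, A; split.
- by move=> [[|[|[|//]]] ?]; rewrite !mxE /=; apply/andP; split; lra.
- apply/eqP => /matrixP /(_ 0 0); rewrite !mxE /= => h.
  have : (0:R) < 2^-1 by rewrite invr_gt0 ltr0n.
  by rewrite h ltxx.
- by move=> i j; rewrite mxE; move/allP: valchk3 => /(_ _ (mem_io i)) /allP /(_ _ (mem_io j)).
- move=> j j' /matrixP e; have e0 := e 0 0; have e1 := e 1 0; have e2 := e 2 0; rewrite !mxE in e0 e1 e2.
  apply/val_inj/eqP.
  move/allP: injchk3_ok => /(_ _ (mem_io j)) /allP /(_ _ (mem_io j')) /implyP; apply.
  by rewrite e0 e1 e2 !eqxx.
- have [c1 c2 c3] := and3P B3chk.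
  apply: (@tot_from_check R 3 12 (shift_mx t A) B3 isT _ c1 c2 c3).
 
  move=> [[|[|[|//]]] ?] j; by rewrite !mxE /B3 !intrD /=; field.
Qed.

Lemma ci0 (R : realType) : ((0:int)%:~R : R) = 0. Proof. by []. Qed.
Lemma ci1 (R : realType) : ((1:int)%:~R : R) = 1. Proof. by []. Qed.
Lemma ciN1 (R : realType) : ((-1:int)%:~R : R) = -1. Proof. exact: mulrN1z. Qed.

Lemma Avals (a : int) : a \in [:: -1; 0; 1] -> [\/ a = -1, a = 0 | a = 1].
Proof. by rewrite !inE => /or3P [/eqP|/eqP|/eqP]; [constructor 1|constructor 2|constructor 3]. Qed.

Definition enc (a : int) : 'I_3 :=
  if a == -1 then @Ordinal 3 0 isT else if a == 0 then @Ordinal 3 1 isT else @Ordinal 3 2 isT.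

Lemma enc_inj a b : a \in [:: -1; 0; 1] -> b \in [:: -1; 0; 1] -> enc a = enc b -> a = b.
Proof.
case/Avals => ->; case/Avals => -> //.
all: by move/(congr1 (@nat_of_ord 3)).
Qed.

Lemma b_inj (a b : int) : a = -1 \/ a = 0 -> b = -1 \/ b = 0 -> (a == 0) = (b == 0) -> a = b.
Proof. by case=> ->; case=> ->. Qed.

Lemma pos_row (R : realType) m n (t : 'cV[R]_m) (A : 'M[int]_(m, n)) i j :
  totally_1_submodular (shift_mx t A) -> 0 < t i ord0 -> A i j \in [:: -1; 0; 1] ->
  A i j = -1 \/ A i j = 0.
Proof.
move=> Ht tp; case/Avals => e; [by left|by right|].
have := t1_entry Ht i j; rewrite mxE e ci1 ler_norml => /andP[_ h].
exfalso; lra.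
Qed.

Lemma t_nz (R : realType) m (t : 'cV[R]_m) : t != 0 -> exists i, t i ord0 != 0.
Proof.
move=> tn; case: (boolP [exists i, t i ord0 != 0]) => [/existsP [i hi]|/existsPn h]; first by exists i.
case/eqP: tn; apply/matrixP => i k; rewrite (ord1 k) mxE.
by move: (h i); rewrite negbK => /eqP.
Qed.

Lemma other2 (i0 : 'I_2) : exists i1 : 'I_2, forall i, i = i0 \/ i = i1.
Proof.
case: i0 => [[|[|//]] p].
- exists 1 => -[[|[|//]] q]; [left|right]; exact: val_inj.
- exists 0 => -[[|[|//]] q]; [right|left]; exact: val_inj.
Qed.

Lemma rows3 (i0 : 'I_3) : exists i1 i2 : 'I_3,
  [/\ i0 != i1, i0 != i2, i1 != i2 & forall i, [\/ i = i0, i = i1 | i = i2]].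
Proof.
case: i0 => [[|[|[|//]]] p].
- exists 1, 2; split => // -[[|[|[|//]]] q]; [constructor 1|constructor 2|constructor 3]; exact: val_inj.
- exists 0, 2; split => // -[[|[|[|//]]] q]; [constructor 2|constructor 1|constructor 3]; exact: val_inj.
- exists 0, 1; split => // -[[|[|[|//]]] q]; [constructor 2|constructor 3|constructor 1]; exact: val_inj.
Qed.

Lemma rows3' (i0 i1 : 'I_3) : i0 != i1 -> exists i2 : 'I_3,
  [/\ i0 != i2, i1 != i2 & forall i, [\/ i = i0, i = i1 | i = i2]].
Proof.
case: i0 => [[|[|[|//]]] p]; case: i1 => [[|[|[|//]]] q] // _.
- exists 2; split => // -[[|[|[|//]]] r]; [constructor 1|constructor 2|constructor 3]; exact: val_inj.
- exists 1; split => // -[[|[|[|//]]] r]; [constructor 1|constructor 3|constructor 2]; exact: val_inj.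
- exists 2; split => // -[[|[|[|//]]] r]; [constructor 2|constructor 1|constructor 3]; exact: val_inj.
- exists 0; split => // -[[|[|[|//]]] r]; [constructor 3|constructor 1|constructor 2]; exact: val_inj.
- exists 1; split => // -[[|[|[|//]]] r]; [constructor 2|constructor 3|constructor 1]; exact: val_inj.
- exists 0; split => // -[[|[|[|//]]] r]; [constructor 3|constructor 2|constructor 1]; exact: val_inj.
Qed.

Lemma upper2 (R : realType) n : shifted_heller_feasible R 2 n -> (n <= 6)%N.
Proof.
case=> t [A [Ht0 Htn HA Hinj Htot]].
have [i0 hi0] := t_nz Htn.
have tp : 0 < t i0 ord0 by rewrite lt_def hi0; case/andP: (Ht0 i0).
have [i1 hcov] := other2 i0.
pose code (j : 'I_n) := (A i0 j == 0, enc (A i1 j)).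
have cinj : injective code.
  move=> j j' [e0 e1]; apply: Hinj; apply/matrixP => i k; rewrite !mxE.
  case: (hcov i) => ->.
  - exact: (b_inj (pos_row Htot tp (HA _ _)) (pos_row Htot tp (HA _ _)) e0).
  - exact: (enc_inj (HA _ _) (HA _ _) e1).
by have := leq_card code cinj; rewrite card_prod card_bool !card_ord.
Qed.

Definition cd (a c d : int) : bool * 'I_3 * 'I_3 := (a == 0, enc c, enc d).
Definition T1 := [:: cd 0 (-1) (-1); cd 0 (-1) 1; cd 0 0 0].
Definition T2 := [:: cd 0 (-1) 0; cd 0 0 (-1); cd (-1) (-1) (-1)].
Definition T3 := [:: cd 0 0 1; cd (-1) (-1) 0; cd (-1) 1 1].
Definition T4 := [:: cd 0 1 (-1); cd (-1) 0 (-1); cd (-1) 1 0].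
Definition T5 := [:: cd 0 1 0; cd (-1) 0 1; cd (-1) 1 (-1)].
Definition T6 := [:: cd 0 1 1; cd (-1) (-1) 1; cd (-1) 0 0].

Lemma part (x : bool * 'I_3 * 'I_3) :
  (count (mem T1) [:: x] + count (mem T2) [:: x] + count (mem T3) [:: x] + count (mem T4) [:: x]
   + count (mem T5) [:: x] + count (mem T6) [:: x])%N = 1%N.
Proof.
case: x => [[b c] d]; case: b; case: c => [[|[|[|//]]] p]; case: d => [[|[|[|//]]] q];
  by vm_compute.
Qed.

Lemma size_part (L : seq (bool * 'I_3 * 'I_3)) :
  size L = (count (mem T1) L + count (mem T2) L + count (mem T3) L + count (mem T4) L
     + count (mem T5) L + count (mem T6) L)%N.
Proof.
elim: L => // x L IH; rewrite -cat1s !count_cat size_cat IH (_ : size [:: x] = 1%N) //; have := part x; lia.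
Qed.

Lemma count_le2 (T : eqType) (L : seq T) v1 v2 v3 : uniq L ->
  ~ [/\ v1 \in L, v2 \in L & v3 \in L] -> (count (mem [:: v1; v2; v3]) L <= 2)%N.
Proof.
move=> uL H; rewrite -size_filter; rewrite leqNgt; apply/negP => hs.
have u1 : uniq (filter (mem [:: v1; v2; v3]) L) by apply: filter_uniq.
have sub : {subset filter (mem [:: v1; v2; v3]) L <= [:: v1; v2; v3]}.
  by move=> x; rewrite mem_filter => /andP[].
have [_ ei] := uniq_min_size u1 sub hs.
apply: H; split.
- have : v1 \in [:: v1; v2; v3] by rewrite !inE eqxx.
  by rewrite -ei mem_filter => /andP[].
- have : v2 \in [:: v1; v2; v3] by rewrite !inE eqxx orbT.
  by rewrite -ei mem_filter => /andP[].
- have : v3 \in [:: v1; v2; v3] by rewrite !inE eqxx !orbT.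
  by rewrite -ei mem_filter => /andP[].
Qed.

Definition D2 (R : realType) (x1 y1 x2 y2 : R) := x1 * y2 - x2 * y1.
Definition D3 (R : realType) (x1 y1 z1 x2 y2 z2 x3 y3 z3 : R) :=
  x1 * (y2 * z3 - y3 * z2) - x2 * (y1 * z3 - y3 * z1) + x3 * (y1 * z2 - y2 * z1).

Ltac norms := repeat match goal with H : is_true (`|_| <= 1) |- _ =>
  rewrite ler_norml in H; case/andP: H => ? ? end.

Lemma caseB (R : realType) n (t : 'cV[R]_3) (A : 'M[int]_(3, n)) (i0 i1 i2 : 'I_3) :
  (forall i j, A i j \in [:: -1; 0; 1]) -> injective (fun j => col j A) ->
  totally_1_submodular (shift_mx t A) ->
  i0 != i1 -> i0 != i2 -> i1 != i2 -> (forall i, [\/ i = i0, i = i1 | i = i2]) ->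
  0 < t i0 ord0 < 1 -> t i1 ord0 = 0 -> t i2 ord0 = 0 -> (n <= 12)%N.
Proof.
move=> HA Hinj Htot d01 d02 d12 cov /andP[s0 s1] t1 t2.
have tp : 0 < t i0 ord0 by [].
pose code (j : 'I_n) := (A i0 j == 0, enc (A i1 j), enc (A i2 j)).
have cinj : injective code.
  move=> j j' [e0 e1 e2]; apply: Hinj; apply/matrixP => i k; rewrite !mxE.
  case: (cov i) => ->.
  - exact: (b_inj (pos_row Htot tp (HA _ _)) (pos_row Htot tp (HA _ _)) e0).
  - exact: (enc_inj (HA _ _) (HA _ _) e1).
  - exact: (enc_inj (HA _ _) (HA _ _) e2).
pose L := map code (enum 'I_n).
have uL : uniq L by rewrite map_inj_uniq // enum_uniq.
have sL : size L = n by rewrite size_map size_enum_ord.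
pose M := shift_mx t A.
have vals : forall j a c d, a \in [:: 0; -1] -> c \in [:: -1; 0; 1] -> d \in [:: -1; 0; 1] ->
    cd a c d = code j ->
    [/\ M i0 j = t i0 ord0 + a%:~R, M i1 j = c%:~R & M i2 j = d%:~R].
  move=> j a c d ha hc hd [ea ec ed].
  have ha' : a = -1 \/ a = 0 by move: ha; rewrite !inE => /orP[/eqP ->|/eqP ->]; [right|left].
  rewrite /M !mxE t1 t2 !add0r.
  rewrite (b_inj ha' (pos_row Htot tp (HA i0 j)) ea).
  by rewrite (enc_inj hc (HA _ _) ec) (enc_inj hd (HA _ _) ed).
have key : forall a1 c1 d1 a2 c2 d2 a3 c3 d3,
    a1 \in [:: 0; -1] -> c1 \in [:: -1; 0; 1] -> d1 \in [:: -1; 0; 1] ->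
    a2 \in [:: 0; -1] -> c2 \in [:: -1; 0; 1] -> d2 \in [:: -1; 0; 1] ->
    a3 \in [:: 0; -1] -> c3 \in [:: -1; 0; 1] -> d3 \in [:: -1; 0; 1] ->
    cd a1 c1 d1 != cd a2 c2 d2 -> cd a1 c1 d1 != cd a3 c3 d3 -> cd a2 c2 d2 != cd a3 c3 d3 ->
    cd a1 c1 d1 \in L -> cd a2 c2 d2 \in L -> cd a3 c3 d3 \in L ->
    let x1 := t i0 ord0 + a1%:~R in let x2 := t i0 ord0 + a2%:~R in let x3 := t i0 ord0 + a3%:~R in
    let y1 := (c1%:~R : R) in let y2 := (c2%:~R : R) in let y3 := (c3%:~R : R) in
    let z1 := (d1%:~R : R) in let z2 := (d2%:~R : R) in let z3 := (d3%:~R : R) in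
    [/\ `|D2 x1 y1 x2 y2| <= 1, `|D2 x1 y1 x3 y3| <= 1, `|D2 x2 y2 x3 y3| <= 1,
        `|D2 x1 z1 x2 z2| <= 1 & `|D2 x1 z1 x3 z3| <= 1]
    /\ [/\ `|D2 x2 z2 x3 z3| <= 1, `|D2 y1 z1 y2 z2| <= 1, `|D2 y1 z1 y3 z3| <= 1,
        `|D2 y2 z2 y3 z3| <= 1 & `|D3 x1 y1 z1 x2 y2 z2 x3 y3 z3| <= 1].
  move=> a1 c1 d1 a2 c2 d2 a3 c3 d3 ha1 hc1 hd1 ha2 hc2 hd2 ha3 hc3 hd3 n12 n13 n23 h1 h2 h3.
  case/mapP: h1 => j1 _ e1; case/mapP: h2 => j2 _ e2; case/mapP: h3 => j3 _ e3.
  have [x1 y1 z1] := vals _ _ _ _ ha1 hc1 hd1 e1.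
  have [x2 y2 z2] := vals _ _ _ _ ha2 hc2 hd2 e2.
  have [x3 y3 z3] := vals _ _ _ _ ha3 hc3 hd3 e3.
  have m12 : j1 != j2 by apply/eqP => e; move: n12; rewrite e1 e2 e eqxx.
  have m13 : j1 != j3 by apply/eqP => e; move: n13; rewrite e1 e3 e eqxx.
  have m23 : j2 != j3 by apply/eqP => e; move: n23; rewrite e2 e3 e eqxx.
  rewrite /= /D2 /D3 -x1 -x2 -x3 -y1 -y2 -y3 -z1 -z2 -z3.
  split; split; (try exact: t1_det2); exact: t1_det3.
have -> : n = size L by [].
rewrite size_part.
have c1 : (count (mem T1) L <= 2)%N.
  apply: count_le2 => // -[h1 h2 h3].
  have := key 0 (-1) (-1) 0 (-1) 1 0 0 0 isT isT isT isT isT isT isT isT isT isT isT isT h1 h2 h3.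
  cbv zeta; rewrite /D2 /D3 ?ci0 ?ci1 ?ciN1 => -[[q1 q2 q3 q4 q5] [q6 q7 q8 q9 q10]].
  norms; lra.
have c2 : (count (mem T2) L <= 2)%N.
  apply: count_le2 => // -[h1 h2 h3].
  have := key 0 (-1) 0 0 0 (-1) (-1) (-1) (-1) isT isT isT isT isT isT isT isT isT isT isT isT h1 h2 h3.
  cbv zeta; rewrite /D2 /D3 ?ci0 ?ci1 ?ciN1 => -[[q1 q2 q3 q4 q5] [q6 q7 q8 q9 q10]].
  norms; lra.
have c3 : (count (mem T3) L <= 2)%N.
  apply: count_le2 => // -[h1 h2 h3].
  have := key 0 0 1 (-1) (-1) 0 (-1) 1 1 isT isT isT isT isT isT isT isT isT isT isT isT h1 h2 h3.
  cbv zeta; rewrite /D2 /D3 ?ci0 ?ci1 ?ciN1 => -[[q1 q2 q3 q4 q5] [q6 q7 q8 q9 q10]].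
  norms; lra.
have c4 : (count (mem T4) L <= 2)%N.
  apply: count_le2 => // -[h1 h2 h3].
  have := key 0 1 (-1) (-1) 0 (-1) (-1) 1 0 isT isT isT isT isT isT isT isT isT isT isT isT h1 h2 h3.
  cbv zeta; rewrite /D2 /D3 ?ci0 ?ci1 ?ciN1 => -[[q1 q2 q3 q4 q5] [q6 q7 q8 q9 q10]].
  norms; lra.
have c5 : (count (mem T5) L <= 2)%N.
  apply: count_le2 => // -[h1 h2 h3].
  have := key 0 1 0 (-1) 0 1 (-1) 1 (-1) isT isT isT isT isT isT isT isT isT isT isT isT h1 h2 h3.
  cbv zeta; rewrite /D2 /D3 ?ci0 ?ci1 ?ciN1 => -[[q1 q2 q3 q4 q5] [q6 q7 q8 q9 q10]].
  norms; lra.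
have c6 : (count (mem T6) L <= 2)%N.
  apply: count_le2 => // -[h1 h2 h3].
  have := key 0 1 1 (-1) (-1) 1 (-1) 0 0 isT isT isT isT isT isT isT isT isT isT isT isT h1 h2 h3.
  cbv zeta; rewrite /D2 /D3 ?ci0 ?ci1 ?ciN1 => -[[q1 q2 q3 q4 q5] [q6 q7 q8 q9 q10]].
  norms; lra.
lia.
Qed.

Lemma upper3 (R : realType) n : shifted_heller_feasible R 3 n -> (n <= 12)%N.
Proof.
case=> t [A [Ht0 Htn HA Hinj Htot]].
have [i0 hi0] := t_nz Htn.
have tp0 : 0 < t i0 ord0 by rewrite lt_def hi0; case/andP: (Ht0 i0).
case: (boolP [exists i1, (i1 != i0) && (t i1 ord0 != 0)]) => [/existsP [i1 /andP [d10 hi1]] | /existsPn hz].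
- have tp1 : 0 < t i1 ord0 by rewrite lt_def hi1; case/andP: (Ht0 i1).
  have d01 : i0 != i1 by rewrite eq_sym.
  have [i2 [_ _ cov]] := rows3' d01.
  pose code (j : 'I_n) := (A i0 j == 0, A i1 j == 0, enc (A i2 j)).
  have cinj : injective code.
    move=> j j' [e0 e1 e2]; apply: Hinj; apply/matrixP => i k; rewrite !mxE.
    case: (cov i) => ->.
    - exact: (b_inj (pos_row Htot tp0 (HA _ _)) (pos_row Htot tp0 (HA _ _)) e0).
    - exact: (b_inj (pos_row Htot tp1 (HA _ _)) (pos_row Htot tp1 (HA _ _)) e1).
    - exact: (enc_inj (HA _ _) (HA _ _) e2).
  by have := leq_card code cinj; rewrite !card_prod !card_bool !card_ord.
- have [i1 [i2 [d01 d02 d12 cov]]] := rows3 i0.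
  have z1 : t i1 ord0 = 0.
    by move: (hz i1); rewrite eq_sym d01 /= negbK => /eqP.
  have z2 : t i2 ord0 = 0.
    by move: (hz i2); rewrite eq_sym d02 /= negbK => /eqP.
  apply: (caseB HA Hinj Htot d01 d02 d12 cov _ z1 z2).
  by rewrite tp0; case/andP: (Ht0 i0).
Qed.

Theorem proposition2p5 (R : realType) :
  shifted_heller_constant_is R 2 6 /\ shifted_heller_constant_is R 3 12.
Proof.
split; split.
- exact: exist2.
- exact: upper2.
- exact: exist3.
- exact: upper3.
Qed.
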